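(* None of the following classes of topological spaces is $\omega$-projective: compact locally compact spaces; compact locally compact sober spaces; stably compact spaces.
   Context: A projective system of topological spaces consists of a directed preordered set $(I,\sqsubseteq)$, spaces $X_i$ and continuous maps $p_{ij}\colon X_j\to X_i$ for $i\sqsubseteq j$ with $p_{ii}=\mathrm{id}$ and $p_{ij}\circ p_{jk}=p_{ik}$; its projective limit is its limit in the category of topological spaces. A class is $\omega$-projective if it is closed under projective limits of systems whose index set has a countable cofinal subset. Compactness assumes no separation axiom. A space is locally compact if for every point $x$ and open neighbourhood $U$ of $x$ there is a compact saturated set $Q$ with $x\in\mathrm{int}(Q)\subseteq Q\subseteq U$ (saturated = upward closed in the specialization preorder). Sober: $T_0$ and every irreducible closed set is the closure of a point. Coherent: the intersection of any two compact saturated subsets is compact. Stably compact: sober, locally compact, coherent and compact. *)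

(* Defs.v *)
From HB Require Import structures.
From mathcomp Require Import all_boot all_order all_algebra.
From mathcomp Require Import all_classical all_reals.
From mathcomp Require Import topology.

Unset Printing Implicit Defensive.

Local Open Scope classical_set_scope.

Record proj_system := ProjSystem {
  ps_I : Type;
  ps_le : ps_I -> ps_I -> Prop;
  ps_refl : forall i, ps_le i i;
  ps_trans : forall i j k, ps_le i j -> ps_le j k -> ps_le i k;
  ps_nonempty : exists i : ps_I, True;
  ps_directed : forall i j, exists k, ps_le i k /\ ps_le j k;
  ps_X : ps_I -> topologicalType;
  ps_p : forall i j, ps_le i j -> ps_X j -> ps_X i;
  ps_p_cont : forall i j (h : ps_le i j), continuous (ps_p i j h);
  ps_p_id : forall i (h : ps_le i i) (x : ps_X i), ps_p i i h x = x;
  ps_p_comp : forall i j k (hij : ps_le i j) (hjk : ps_le j k)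
      (hik : ps_le i k) (x : ps_X k),
    ps_p i j hij (ps_p j k hjk x) = ps_p i k hik x
}.

Definition countably_cofinal (S : proj_system) : Prop :=
  exists C : set (@ps_I S), countable C /\
    forall i, exists c, C c /\ ps_le S i c.

Definition plim_set (S : proj_system) : set (prod_topology (@ps_X S)) :=
  [set x | forall i j (h : @ps_le S i j), @ps_p S i j h (x j) = x i].

Definition plim (S : proj_system) : topologicalType :=
  set_type (plim_set S).

Definition omega_projective (P : topologicalType -> Prop) : Prop :=
  forall S : proj_system, countably_cofinal S ->
    (forall i, P (@ps_X S i)) -> P (plim S).

Section Notions.
Context {T : topologicalType}.

Definition spec_le (x y : T) : Prop := closure [set y] x.

Definition saturated (Q : set T) : Prop :=
  forall x y, Q x -> spec_le x y -> Q y.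

End Notions.

Definition compact_space (T : topologicalType) : Prop := compact [set: T].

Definition locally_compact_space (T : topologicalType) : Prop :=
  forall (x : T) (U : set T), open U -> U x ->
    exists Q : set T, compact Q /\ saturated Q /\ interior Q x /\ Q `<=` U.

Definition irreducible_closed (T : topologicalType) (F : set T) : Prop :=
  closed F /\ F !=set0 /\
  forall A B : set T, closed A -> closed B -> F `<=` A `|` B ->
    F `<=` A \/ F `<=` B.

Definition sober_space (T : topologicalType) : Prop :=
  kolmogorov_space T /\
  forall F : set T, irreducible_closed T F -> exists x : T, F = closure [set x].

Definition coherent_space (T : topologicalType) : Prop :=
  forall Q1 Q2 : set T, compact Q1 -> saturated Q1 -> compact Q2 -> saturated Q2 ->
    compact (Q1 `&` Q2).

Definition stably_compact (T : topologicalType) : Prop :=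
  sober_space T /\ locally_compact_space T /\ coherent_space T /\ compact_space T.

(* Main.v *)
Require Import Defs.
From HB Require Import structures.
From mathcomp Require Import all_boot all_order all_algebra.
From mathcomp Require Import all_classical all_reals.
From mathcomp Require Import topology.
Local Open Scope classical_set_scope.

Inductive apt := Bot | Inf | Apt of nat | Bpt of nat & nat.

Definition ale (n : nat) (x y : apt) : Prop :=
  match x, y with
  | Bot, _ => True
  | Inf, Inf => True
  | Inf, Apt k => (n <= k)%N
  | Apt k, Apt k' => k = k'
  | Bpt k j, Bpt k' j' => k = k' /\ j = j'
  | _, _ => False
  end.

Lemma ale_refl n x : ale n x x.
Proof. by case: x => //= *; split. Qed.

Lemma ale_trans n x y z : ale n x y -> ale n y z -> ale n x z.
Proof.
by case: x; case: y => //; case: z => //= *; intuition; subst.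
Qed.

Definition upset n (A : set apt) := forall x y, A x -> ale n x y -> A y.

Definition PX (n : nat) : Type := apt.
HB.instance Definition _ n := gen_eqMixin (PX n).
HB.instance Definition _ n := gen_choiceMixin (PX n).

Lemma upsetT n : upset n setT. Proof. by []. Qed.
Lemma upsetI n : setI_closed (upset n).
Proof. by move=> A B hA hB x y [Ax Bx] l; split; [exact: hA l|exact: hB l]. Qed.
Lemma upset_bigU n (I : Type) (f : I -> set apt) : (forall i, upset n (f i)) ->
  upset n (\bigcup_i f i).
Proof. by move=> h x y [i _ fx] l; exists i => //; exact: h fx l. Qed.

HB.instance Definition _ n := isOpenTopological.Build (PX n) (@upsetT n) (@upsetI n) (@upset_bigU n).

Lemma aopenP n (A : set (PX n)) : open A = upset n A.
Proof. by []. Qed.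

Definition upp n (x : PX n) : set (PX n) := ale n x.

Lemma upp_open n x : @open (PX n) (upp n x).
Proof. rewrite aopenP => y z; exact: ale_trans. Qed.

Lemma anbhsP n (x : PX n) (A : set (PX n)) : nbhs x A <-> (forall y, ale n x y -> A y).
Proof.
rewrite nbhsE; split.
  by case=> B [oB Bx] BA y l; apply: BA; exact: oB l.
move=> h; exists (upp n x) => //; split; [exact: upp_open|exact: ale_refl].
Qed.

Lemma aclosureP n (D : set (PX n)) (y : PX n) : closure D y <-> exists z, ale n y z /\ D z.
Proof.
split.
  move=> /(_ (upp n y)) [].
    by apply/anbhsP.
  by move=> z [Dz l]; exists z.
move=> [z [l Dz]] B /anbhsP h; exists z; split => //; exact: h.
Qed.

Lemma spec_leP n (x y : PX n) : spec_le x y <-> ale n x y.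
Proof.
rewrite /spec_le aclosureP; split; first by case=> z [l e]; rewrite -e.
by move=> l; exists y.
Qed.

Lemma aclosedP n (D : set (PX n)) : closed D <-> (forall x y, ale n x y -> D y -> D x).
Proof.
split.
  by move=> cD x y l Dy; apply: cD; apply/aclosureP; exists y.
by move=> h y /aclosureP [z [l Dz]]; exact: h l Dz.
Qed.

Lemma compact_upp n (x : PX n) : compact (upp n x).
Proof.
move=> F FF Fx; exists x; split; first exact: ale_refl.
move=> A B FA /anbhsP hB.
have [z [Az uz]] := filter_ex (filterI FA Fx).
by exists z; split => //; exact: hB.
Qed.

Lemma compactT n : compact_space (PX n).
Proof.
rewrite /compact_space.
have -> : [set: PX n] = upp n Bot by apply/seteqP; split => //.
exact: compact_upp.
Qed.

Lemma lc n : locally_compact_space (PX n).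
Proof.
move=> x U oU Ux; exists (upp n x); split; first exact: compact_upp.
split; first by move=> y z uy /spec_leP l; exact: ale_trans l.
split; first by apply/anbhsP.
by move=> y l; exact: oU l.
Qed.

Lemma ale_anti n x y : ale n x y -> ale n y x -> x = y.
Proof.
case: x; case: y => //= *; intuition; subst => //.
Qed.

Definition maxl n (m : apt) := forall z, ale n m z -> z = m.

Lemma aclusterP n (F : set_system (PX n)) y : cluster F y -> forall A, F A -> exists z, A z /\ ale n y z.
Proof.
move=> cl A FA; have [z [Az uz]] := cl A (upp n y) FA (proj2 (anbhsP _ _ _) (fun _ l => l)).
by exists z.
Qed.

Lemma coh n : coherent_space (PX n).
Proof.
move=> Q1 Q2 c1 s1 c2 s2 F FF FQ.
have u1 : forall x y, Q1 x -> ale n x y -> Q1 y.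
  by move=> x y qx l; apply: s1 qx _; apply/spec_leP.
have u2 : forall x y, Q2 x -> ale n x y -> Q2 y.
  by move=> x y qx l; apply: s2 qx _; apply/spec_leP.
have [y1 [Q1y1 cl1]] := c1 F FF (filterS (fun x (h : (Q1 `&` Q2) x) => h.1) FQ).
have [y2 [Q2y2 cl2]] := c2 F FF (filterS (fun x (h : (Q1 `&` Q2) x) => h.2) FQ).
have mx : forall y, cluster F y -> maxl n y -> (Q1 `&` Q2 `&` cluster F) !=set0.
  move=> y cl my; have [z [Qz l]] := aclusterP _ _ _ cl _ FQ.
  by move: Qz; rewrite (my _ l) => Qz; exists y.
case: y1 Q1y1 cl1 => [|| k | k j] Q1y1 cl1.
- by exists y2; split => //; split => //; exact: u1 Q1y1 _.
- case: y2 Q2y2 cl2 => [|| k | k j] Q2y2 cl2.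
  + by exists Inf; split => //; split => //; exact: u2 Q2y2 _.
  + by exists Inf.
  + by apply: mx cl2 _; case=> //= ? ->.
  + by apply: mx cl2 _; case=> // ? ? /= [-> ->].
- by apply: mx cl1 _; case=> //= ? ->.
- by apply: mx cl1 _; case=> // ? ? /= [-> ->].
Qed.

Lemma closure1P n (x y : PX n) : closure [set x] y <-> ale n y x.
Proof.
rewrite aclosureP; split; first by case=> z [l e]; rewrite -e.
by move=> l; exists x.
Qed.

Lemma eq_closure1 n (F : set (PX n)) x : closed F -> F x ->
  (forall y, F y -> ale n y x) -> F = closure [set x].
Proof.
move=> /aclosedP cF Fx h; apply/seteqP; split => y.
  by move=> Fy; apply/closure1P; exact: h.
by move=> /closure1P l; exact: cF l Fx.
Qed.

Lemma sober n : sober_space (PX n).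
Proof.
split.
  move=> x y /eqP nxy.
  have [lxy|nlxy] := pselect (ale n x y); last first.
    exists (upp n x); left; split; first by apply/mem_set; apply/anbhsP.
    by apply/mem_set.
  have [lyx|nlyx] := pselect (ale n y x); first by case: (nxy (ale_anti _ _ _ lxy lyx)).
  exists (upp n y); right; split; first by apply/mem_set; apply/anbhsP.
  by apply/mem_set.
move=> F [cF [[z0 Fz0] irr]].
have cF' := proj1 (aclosedP _ F) cF.
have FBot : F Bot by apply: cF' Fz0.
have [[m [Fm mm]]|nm] := pselect (exists m, F m /\ maxl n m).
  exists m; apply: eq_closure1 => //.
  have [] := irr (closure [set m]) (F `\` [set m]) (@closed_closure _ _) _ _.
  - apply/aclosedP => x y l [Fy ym]; split; first exact: cF' l Fy.
    by move=> xm; apply: ym; rewrite /= xm in l; exact: mm.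
  - move=> y Fy; have [->|ym] := pselect (y = m); first by left; apply/closure1P; exact: ale_refl.
    by right.
  - by move=> h y Fy; apply/closure1P; exact: h.
  - by move=> h; case: (h m Fm) => _ /(_ erefl).
have nA : forall k, ~ F (Apt k) by move=> k Fk; apply: nm; exists (Apt k); split => //; case=> //= ? ->.
have nB : forall k j, ~ F (Bpt k j).
  by move=> k j Fk; apply: nm; exists (Bpt k j); split => //; case=> // ? ? /= [-> ->].
have [FI|nFI] := pselect (F Inf).
  exists Inf; apply: eq_closure1 => //.
  by case=> //= [k /nA|k j /nB].
exists Bot; apply: eq_closure1 => //.
by case=> //= [/nFI|k /nA|k j /nB].
Qed.

Lemma stab n : stably_compact (PX n).
Proof. split; [exact: sober|split; [exact: lc|split; [exact: coh|exact: compactT]]]. Qed.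

Definition fl (n : nat) (x : apt) : apt :=
  match x with Bpt k j => if (j < n)%N then Bpt k j else Apt k | _ => x end.

Definition pp (i j : nat) (x : PX j) : PX i := if i == j then x else fl i x.

Lemma fl_fl i j x : (i <= j)%N -> fl i (fl j x) = fl i x.
Proof.
move=> hij; case: x => //= k l.
case: ifP => //= hl; case: ifP => // hli.
by move: hl; rewrite (leq_trans hli hij).
Qed.

Lemma mono_cont m n (g : PX m -> PX n) :
  (forall x y, ale m x y -> ale n (g x) (g y)) -> continuous g.
Proof.
move=> mo x A /anbhsP h; apply/anbhsP => y l; apply: h; exact: mo l.
Qed.

Lemma pp_cont i j : (i <= j)%N -> continuous (pp i j).
Proof.
move=> hij; apply: mono_cont; rewrite /pp; case: eqP => [<-|/eqP ne] //.
have lt : (i < j)%N by rewrite ltn_neqAle ne.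
case=> [|| k | k l]; case=> [|| k' | k' l'] //=.
all: try (move=> hk; apply: leq_trans hk; exact: ltnW).
all: try (move=> ->; exact: ale_refl).
all: try (case=> -> ->; exact: ale_refl).

Qed.

Lemma pp_id i x : pp i i x = x.
Proof. by rewrite /pp eqxx. Qed.

Lemma pp_comp i j k x : (i <= j)%N -> (j <= k)%N -> pp i j (pp j k x) = pp i k x.
Proof.
move=> hij hjk; rewrite /pp.
case: (eqVneq i j) => [<-|nij]; first by [].
case: (eqVneq j k) => [<-|njk]; first by rewrite (negbTE nij).
have -> : (i == k) = false.
  by apply/eqP => eik; subst k; move: nij; rewrite eqn_leq hij hjk.
by rewrite fl_fl.
Qed.

Definition Ssys : proj_system.
refine (@ProjSystem nat (fun i j => is_true (i <= j)%N) (fun i => leqnn i)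
  (fun i j k h1 h2 => leq_trans h1 h2) (ex_intro _ 0%N I) _ PX
  (fun i j _ => pp i j) (fun i j h => @pp_cont i j h) (fun i _ x => pp_id i x)
  (fun i j k h1 h2 _ x => @pp_comp i j k x h1 h2)).
by move=> i j; exists (maxn i j); split; [exact: leq_maxl|exact: leq_maxr].
Defined.

Lemma S_cc : countably_cofinal Ssys.
Proof.
exists setT; split; first exact: countableP.
by move=> i; exists i; split => //=.
Qed.

Definition crd (i : nat) (z : plim Ssys) : PX i := (set_val z : prod_topology (@ps_X Ssys)) i.

Lemma crd_cont i : continuous (crd i).
Proof.
move=> z.
apply: (@continuous_comp (plim Ssys) (prod_topology (@ps_X Ssys)) (PX i) set_val (fun f => f i)).
  exact: initial_continuous.
exact: (@proj_continuous nat PX i).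
Qed.

Lemma xinf_mem : (fun n => Inf : PX n) \in plim_set Ssys.
Proof. by apply/mem_set => i j h /=; rewrite /pp; case: eqP. Qed.

Definition xinf : plim Ssys := exist _ (fun n => Inf : PX n) xinf_mem.

Lemma bpt_mem k j : (fun n => fl n (Bpt k j) : PX n) \in plim_set Ssys.
Proof.
apply/mem_set => i m h /=; rewrite /pp; case: eqP => [->|_] //.
have e := @fl_fl i m (Bpt k j) h. exact: e.
Qed.

Definition bpt k j : plim Ssys := exist _ (fun n => fl n (Bpt k j) : PX n) (bpt_mem k j).

Definition Hf : set_system (prod_topology (@ps_X Ssys)) :=
  [set V | exists N, forall k j, (N <= k)%N -> (N <= j)%N -> V (set_val (bpt k j))].

Lemma H_filter : Filter Hf.
Proof.
split.
- by exists 0%N.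
- move=> A B [N1 h1] [N2 h2]; exists (maxn N1 N2) => k j hk hj; split.
    by apply: h1; [exact: leq_trans (leq_maxl _ _) hk|exact: leq_trans (leq_maxl _ _) hj].
  by apply: h2; [exact: leq_trans (leq_maxr _ _) hk|exact: leq_trans (leq_maxr _ _) hj].
- by move=> A B AB [N h]; exists N => k j hk hj; apply: AB; exact: h.
Qed.

Lemma H_cvg : Hf --> (set_val xinf : prod_topology (@ps_X Ssys)).
Proof.
apply/(@cvg_sup _ _ _ Hf _ H_filter) => i.
move=> W [B' [[W' oW' eB] B'x sub]].
exists i => k j hk hj; apply: sub; rewrite -eB /=.
move: B'x; rewrite -eB /= => WI.
have -> : set_val (bpt k j) i = Apt k by rewrite set_valE /= ltnNge hj.
exact: (oW' Inf (Apt k) WI hk).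
Qed.

Lemma stepA (Q : set (plim Ssys)) : nbhs xinf Q ->
  exists N, forall k j, (N <= k)%N -> (N <= j)%N -> Q (bpt k j).
Proof.
move=> [B [[V oV eB] Bx BQ]].
have nV : nbhs (set_val xinf : prod_topology (@ps_X Ssys)) V.
  by apply: open_nbhs_nbhs; split => //; rewrite -eB in Bx.
have [N hN] := H_cvg _ nV.
by exists N => k j hk hj; apply: BQ; rewrite -eB; exact: hN.
Qed.

Definition Gf (N : nat) : set_system (plim Ssys) :=
  [set A | exists M, forall k, (M <= k)%N -> A (bpt k N)].

Lemma G_pfilter N : ProperFilter (Gf N).
Proof.
split.
  by move=> [M h]; exact: (h M (leqnn M)).
split.
- by exists 0%N.
- move=> A B [N1 h1] [N2 h2]; exists (maxn N1 N2) => k hk; split.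
    by apply: h1; exact: leq_trans (leq_maxl _ _) hk.
  by apply: h2; exact: leq_trans (leq_maxr _ _) hk.
- by move=> A B AB [M h]; exists M => k hk; apply: AB; exact: h.
Qed.

Lemma notLC : ~ locally_compact_space (plim Ssys).
Proof.
move=> lc.
pose U := [set z : plim Ssys | crd 0%N z <> Bot].
have oU : open U.
  apply: (proj1 (continuousP _) (crd_cont 0%N) [set w : PX 0%N | w <> Bot]).
  by rewrite aopenP => x y nx l yB; apply: nx; move: l; rewrite yB; case: x.
have Ux : U xinf by [].
have [Q [cQ [_ [iQ QU]]]] := lc xinf U oU Ux.
have [N hN] := stepA Q iQ.
have GQ : Gf N Q by exists N => k hk; exact: hN.
have [y [Qy cly]] := cQ (Gf N) (G_pfilter N) GQ.
have Uy := QU y Qy.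
have [c ec] : exists c, crd N.+1 y = c by eexists.
have cB : c <> Bot.
  move=> cb; apply: Uy.
  have := set_mem (valP y) 0%N N.+1 (isT : (0 <= N.+1)%N).
  rewrite /= /pp /= => e.
  rewrite /crd set_valE /= -e; rewrite /crd set_valE /= in ec; by rewrite ec cb.
have nV : nbhs y (crd N.+1 @^-1` upp N.+1 c).
  by apply: crd_cont; rewrite ec; apply/anbhsP.
have GA : Gf N [set z | ~ ale N.+1 c (crd N.+1 z)].
  exists (match c with Bpt k0 _ => k0.+1 | _ => 0%N end) => k hk /=.
  rewrite /crd set_valE /= ltnSn.
  clear ec nV; move: hk cB; case: c.
  - by move=> _ /(_ erefl).
  - by move=> _ _ /=; case.
  - by move=> ? _ _ /=; case.
  - by move=> k0 j0 hk _ /= [e _]; move: hk; rewrite e ltnn.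

have [z [Az Vz]] := cly _ _ GA nV.
exact: Az Vz.
Qed.

Theorem corollary3p7 :
  ~ omega_projective (fun T => compact_space T /\ locally_compact_space T) /\
  ~ omega_projective (fun T => compact_space T /\ locally_compact_space T /\
                               sober_space T) /\
  ~ omega_projective stably_compact.
Proof.
split; [|split].
- move=> h; apply: notLC; exact: (h Ssys S_cc (fun i => conj (compactT i) (lc i))).2.
- move=> h; apply: notLC.
  exact: (h Ssys S_cc (fun i => conj (compactT i) (conj (lc i) (sober i)))).2.1.
- move=> h; apply: notLC; exact: (h Ssys S_cc stab).2.1.
Qed.
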